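(* Let $E$ be a Banach lattice whose dual space $E'$ is order continuous, and let $X$ be a Banach space. Then every Dunford-Pettis operator $T\colon E\to X$ is $uaw$-Dunford-Pettis.
   Context: All operators are bounded linear operators. A net $(x_\alpha)$ in a Banach lattice $E$ is $uaw$-convergent to $x\in E$ (written $x_\alpha\xrightarrow{uaw}x$) if for every $u\in E_+$ the net $|x_\alpha-x|\wedge u$ converges weakly to $0$. An operator $T\colon E\to X$ from a Banach lattice to a Banach space is Dunford-Pettis if it maps weakly null sequences to norm null sequences. It is $uaw$-Dunford-Pettis if for every norm bounded sequence $(x_n)$ in $E$ with $x_n\xrightarrow{uaw}0$ one has $\|T(x_n)\|\to 0$. *)

(* Defs.v *)
From HB Require Import structures.
From mathcomp Require Import all_boot all_order all_algebra.
From mathcomp Require Import all_classical all_reals all_analysis.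
Set Implicit Arguments. Unset Strict Implicit. Unset Printing Implicit Defensive.
Import Order.TTheory GRing.Theory Num.Theory.
Import numFieldNormedType.Exports.
Local Open Scope classical_set_scope.
Local Open Scope ring_scope.

(* A Banach lattice structure on a (real) Banach space E:
   a vector order which is a lattice (joins; meets are derived) and whose norm
   is a lattice norm: |x| <= |y| implies ||x|| <= ||y||. *)
Record banach_lattice (R : realType) (E : completeNormedModType R) := BanachLattice {
  ble : E -> E -> Prop;
  bjoin : E -> E -> E;
  ble_refl : forall x, ble x x;
  ble_trans : forall x y z, ble x y -> ble y z -> ble x z;
  ble_anti : forall x y, ble x y -> ble y x -> x = y;
  ble_add : forall x y z, ble x y -> ble (x + z) (y + z);
  ble_scale : forall (a : R) x y, 0 <= a -> ble x y -> ble (a *: x) (a *: y);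
  bjoin_ubl : forall x y, ble x (bjoin x y);
  bjoin_ubr : forall x y, ble y (bjoin x y);
  bjoin_lub : forall x y z, ble x z -> ble y z -> ble (bjoin x y) z;
  bnorm_mono : forall x y,
    ble (bjoin x (- x)) (bjoin y (- y)) -> `|x| <= `|y|
}.

Section BL.
Variables (R : realType) (E : completeNormedModType R) (L : banach_lattice E).

Definition bmeet (x y : E) : E := - bjoin L (- x) (- y).
Definition babs (x : E) : E := bjoin L x (- x).

Definition is_dual (f : E -> R) : Prop :=
  (forall (a : R) (x y : E), f (a *: x + y) = a * f x + f y) /\ continuous f.

Definition dual_le (f g : E -> R) : Prop :=
  forall x, ble L 0 x -> f x <= g x.

(* The dual E' has order continuous norm: for every net (f_a) in E' with
   f_a decreasing to 0 (i.e. decreasing with infimum 0 in E'), ||f_a|| -> 0.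
   Nets are indexed by an arbitrary nonempty directed preordered type. *)
Definition dual_order_continuous : Prop :=
  forall (I : Type) (leI : I -> I -> Prop),
    (forall i, leI i i) ->
    (forall i j k, leI i j -> leI j k -> leI i k) ->
    inhabited I ->
    (forall i j, exists k, leI i k /\ leI j k) ->
    forall f : I -> E -> R,
      (forall i, is_dual (f i)) ->
      (forall i j, leI i j -> dual_le (f j) (f i)) ->
      (forall i, dual_le (fun _ => 0) (f i)) ->
      (forall h, is_dual h -> (forall i, dual_le h (f i)) ->
                 dual_le h (fun _ => 0)) ->
      forall eps : R, 0 < eps ->
        exists i0, forall i, leI i0 i ->
          forall x : E, `|x| <= 1 -> `|f i x| <= eps.

Definition weakly_null (x : nat -> E) : Prop :=
  forall f, is_dual f -> (fun n => f (x n)) @ \oo --> (0 : R).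

Definition uaw_null (x : nat -> E) : Prop :=
  forall u, ble L 0 u -> weakly_null (fun n => bmeet (babs (x n)) u).

End BL.

Section Ops.
Variables (R : realType) (E : completeNormedModType R) (L : banach_lattice E)
  (X : completeNormedModType R).

Definition is_operator (T : E -> X) : Prop :=
  (forall (a : R) (x y : E), T (a *: x + y) = a *: T x + T y) /\ continuous T.

Definition dunford_pettis (T : E -> X) : Prop :=
  forall x : nat -> E, weakly_null x -> (fun n => T (x n)) @ \oo --> (0 : X).

Definition uaw_dunford_pettis (T : E -> X) : Prop :=
  forall x : nat -> E, (exists M : R, forall n, `|x n| <= M) ->
    uaw_null L x -> (fun n => T (x n)) @ \oo --> (0 : X).
End Ops.

(* Main.v *)
From HB Require Import structures.
Require Import Defs.
From mathcomp Require Import all_boot all_order all_algebra.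
From mathcomp Require Import all_classical all_reals all_analysis.
From mathcomp Require Import ring lra.
Set Implicit Arguments. Unset Strict Implicit. Unset Printing Implicit Defensive.
Import Order.TTheory GRing.Theory Num.Theory.
Import numFieldNormedType.Exports.
Local Open Scope classical_set_scope.
Local Open Scope ring_scope.
Section Lat.
Variables (R : realType) (E : completeNormedModType R) (L : banach_lattice E).
Local Notation "x <=: y" := (ble L x y) (at level 70).
Local Notation jn := (bjoin L).
Local Notation mt := (bmeet L).
Local Notation ab := (babs L).
Definition pos (x : E) := jn x 0.
Definition neg (x : E) := jn (- x) 0.

Lemma lrefl x : x <=: x. Proof. exact: ble_refl. Qed.
Lemma ltr x y z : x <=: y -> y <=: z -> x <=: z. Proof. exact: ble_trans. Qed.
Lemma lanti x y : x <=: y -> y <=: x -> x = y. Proof. exact: ble_anti. Qed.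
Lemma laddr x y z : x <=: y -> x + z <=: y + z. Proof. exact: ble_add. Qed.
Lemma laddl x y z : x <=: y -> z + x <=: z + y.
Proof. by move=> h; rewrite ![z + _]addrC; apply: laddr. Qed.
Lemma ladd a b c d : a <=: b -> c <=: d -> a + c <=: b + d.
Proof. by move=> h1 h2; apply: ltr (laddr _ h1) (laddl _ h2). Qed.
Lemma lsub0 x y : x <=: y -> 0 <=: y - x.
Proof. by move=> h; have := laddr (- x) h; rewrite subrr. Qed.
Lemma lsub0' x y : 0 <=: y - x -> x <=: y.
Proof. by move=> h; have := laddr x h; rewrite add0r subrK. Qed.
Lemma lopp x y : x <=: y -> - y <=: - x.
Proof.
move=> h; have := laddr (- x - y) h.
by rewrite addrA subrr add0r addrA addrAC subrr add0r.
Qed.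
Lemma lscale (c : R) x y : 0 <= c -> x <=: y -> c *: x <=: c *: y.
Proof. exact: ble_scale. Qed.
Lemma lscale0 (c : R) x : 0 <= c -> 0 <=: x -> 0 <=: c *: x.
Proof. by move=> c0 h; have := lscale c0 h; rewrite scaler0. Qed.
Lemma lscalel (c d : R) x : c <= d -> 0 <=: x -> c *: x <=: d *: x.
Proof.
move=> cd h; apply: lsub0'; rewrite -scalerBl; apply: lscale0 => //.
by rewrite subr_ge0.
Qed.
Lemma ladd0 a b : 0 <=: a -> 0 <=: b -> 0 <=: a + b.
Proof. by move=> h1 h2; have := ladd h1 h2; rewrite addr0. Qed.
Lemma lsum (n : nat) (F : nat -> E) : (forall k, 0 <=: F k) ->
  0 <=: \sum_(k < n) F k.
Proof.
move=> h; elim: n => [|n IH]; first by rewrite big_ord0; exact: lrefl.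
by rewrite big_ord_recr /=; apply: ladd0.
Qed.

Lemma jubl x y : x <=: jn x y. Proof. exact: bjoin_ubl. Qed.
Lemma jubr x y : y <=: jn x y. Proof. exact: bjoin_ubr. Qed.
Lemma jlub x y z : x <=: z -> y <=: z -> jn x y <=: z. Proof. exact: bjoin_lub. Qed.
Local Hint Resolve jubl jubr lrefl : core.
Lemma jC x y : jn x y = jn y x.
Proof. by apply: lanti; apply: jlub. Qed.
Lemma jA x y z : jn x (jn y z) = jn (jn x y) z.
Proof.
apply: lanti; apply: jlub.
- exact: ltr (jubl x y) (jubl _ z).
- by apply: jlub; [apply: ltr (jubr x y) (jubl _ z)|apply: jubr].
- by apply: jlub; [apply: jubl|apply: ltr (jubl y z) (jubr x _)].
- exact: ltr (jubr y z) (jubr x _).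
Qed.
Lemma jmono x y x' y' : x <=: x' -> y <=: y' -> jn x y <=: jn x' y'.
Proof.
by move=> h1 h2; apply: jlub; [apply: ltr h1 (jubl _ _)|apply: ltr h2 (jubr _ _)].
Qed.
Lemma jle x y : x <=: y -> jn x y = y.
Proof. by move=> h; apply: lanti; [apply: jlub => //; apply: lrefl|apply: jubr]. Qed.
Lemma jid x : jn x x = x. Proof. exact/jle/lrefl. Qed.
Lemma jD x y z : jn (x + z) (y + z) = jn x y + z.
Proof.
apply: lanti.
  by apply: jlub; apply: laddr; [apply: jubl|apply: jubr].
have h : jn x y <=: jn (x + z) (y + z) - z.
  rewrite -{1}[x](addrK z) -{1}[y](addrK z).
  by apply: jlub; apply: laddr; [apply: jubl|apply: jubr].
by have := laddr z h; rewrite subrK.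
Qed.
Lemma jZ (c : R) x y : 0 < c -> jn (c *: x) (c *: y) = c *: jn x y.
Proof.
move=> c0; apply: lanti.
  by apply: jlub; apply: lscale; rewrite ?ltW// .
have cn := lt0r_neq0 c0.
have h : jn x y <=: c^-1 *: jn (c *: x) (c *: y).
  apply: jlub.
    by rewrite -{1}[x](scalerK cn); apply: lscale; rewrite ?invr_ge0 ?ltW.
  by rewrite -{1}[y](scalerK cn); apply: lscale; rewrite ?invr_ge0 ?ltW.
have := lscale (ltW c0) h.
by rewrite scalerA divff // scale1r.
Qed.

Lemma mE x y : mt x y = - jn (- x) (- y). Proof. by []. Qed.
Lemma mlbl x y : mt x y <=: x.
Proof. by rewrite mE -{2}[x]opprK; apply: lopp; apply: jubl. Qed.
Lemma mlbr x y : mt x y <=: y.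
Proof. by rewrite mE -{2}[y]opprK; apply: lopp; apply: jubr. Qed.
Lemma mglb x y z : z <=: x -> z <=: y -> z <=: mt x y.
Proof.
move=> h1 h2; rewrite mE -[z]opprK; apply: lopp.
by apply: jlub; apply: lopp.
Qed.
Lemma mC x y : mt x y = mt y x. Proof. by rewrite !mE jC. Qed.
Lemma mmono x y x' y' : x <=: x' -> y <=: y' -> mt x y <=: mt x' y'.
Proof.
by move=> h1 h2; apply: mglb; [apply: ltr (mlbl _ _) h1|apply: ltr (mlbr _ _) h2].
Qed.
Lemma mle x y : x <=: y -> mt x y = x.
Proof. by move=> h; apply: lanti; [apply: mlbl|apply: mglb => //; apply: lrefl]. Qed.
Lemma mid x : mt x x = x. Proof. exact/mle/lrefl. Qed.
Lemma mD x y z : mt (x + z) (y + z) = mt x y + z.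
Proof. by rewrite !mE !opprD jD opprD opprK. Qed.
Lemma mZ (c : R) x y : 0 <= c -> mt (c *: x) (c *: y) = c *: mt x y.
Proof.
rewrite le0r => /orP[/eqP->|c0]; first by rewrite !scale0r mid.
by rewrite !mE -!scalerN jZ // scalerN.
Qed.
Lemma mjsum x y : mt x y + jn x y = x + y.
Proof.
rewrite mE; apply/eqP; rewrite addrC subr_eq; apply/eqP.
have e := jD (- x) (- y) (x + y).
rewrite addKr [x + y]addrC addKr in e.
by rewrite jC e [y + x]addrC; exact: addrC.
Qed.

Lemma pos_ge0 x : 0 <=: pos x. Proof. exact: jubr. Qed.
Lemma neg_ge0 x : 0 <=: neg x. Proof. exact: jubr. Qed.
Lemma pos_ge x : x <=: pos x. Proof. exact: jubl. Qed.
Local Hint Resolve pos_ge0 neg_ge0 : core.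
Lemma posBneg x : pos x - neg x = x.
Proof.
apply/eqP; rewrite subr_eq; apply/eqP.
by rewrite /neg addrC -jD addNr add0r jC.
Qed.
Lemma pos_id a : 0 <=: a -> pos a = a.
Proof. by move=> h; rewrite /pos jC jle. Qed.
Lemma neg_id a : 0 <=: a -> neg a = 0.
Proof.
move=> h; rewrite /neg jle //; rewrite -oppr0; exact: lopp.
Qed.
Lemma pos_mono x y : x <=: y -> pos x <=: pos y.
Proof. by move=> h; apply: jmono => //; apply: lrefl. Qed.
Lemma posZ (c : R) x : 0 <= c -> pos (c *: x) = c *: pos x.
Proof.
rewrite le0r => /orP[/eqP->|c0]; first by rewrite !scale0r /pos jid.
by rewrite /pos -jZ // scaler0.
Qed.
Lemma negE x : neg x = pos (- x). Proof. by []. Qed.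

Lemma ab_ge0 x : 0 <=: ab x.
Proof.
have h : 0 <=: ab x + ab x.
  by have := ladd (jubl x (- x)) (jubr x (- x)); rewrite subrr.
have c0 : (0:R) <= 2^-1 by rewrite invr_ge0 ler0n.
have := lscale c0 h.
have e2 : ab x + ab x = (2:R) *: ab x by rewrite scaler_nat mulr2n.
by rewrite scaler0 e2 scalerA mulVf ?pnatr_eq0 // scale1r.
Qed.
Local Hint Resolve ab_ge0 : core.
Lemma ab_posneg x : ab x = pos x + neg x.
Proof.
have e1 : x + neg x = pos x by rewrite -{1}(posBneg x) subrK.
have -> : pos x + neg x = jn (pos x) (neg x).
  by rewrite {1}/pos -jD e1 add0r.
rewrite /pos /neg jA -[jn (jn x 0) (- x)]jA [jn 0 (- x)]jC jA -jA jid.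
by symmetry; rewrite jC; apply: jle; exact: ab_ge0.
Qed.
Lemma ab_id a : 0 <=: a -> ab a = a.
Proof. by move=> h; rewrite ab_posneg pos_id // neg_id // addr0. Qed.
Lemma pos_le_ab x : pos x <=: ab x.
Proof. by rewrite ab_posneg -{1}[pos x]addr0; apply: laddl; apply: neg_ge0. Qed.
Lemma neg_le_ab x : neg x <=: ab x.
Proof. by rewrite ab_posneg -{1}[neg x]add0r; apply: laddr; apply: pos_ge0. Qed.
Lemma le_ab x : x <=: ab x. Proof. exact: jubl. Qed.
Lemma oppr_le_ab x : - x <=: ab x. Proof. exact: jubr. Qed.
Lemma abN x : ab (- x) = ab x. Proof. by rewrite /babs opprK jC. Qed.

Lemma pos_meet_neg x : mt (pos x) (neg x) = 0.
Proof.
have h := mjsum (pos x) (neg x).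
have e : jn (pos x) (neg x) = pos x + neg x.
  rewrite -ab_posneg /pos /neg jA -[jn (jn x 0) (- x)]jA [jn 0 (- x)]jC jA -jA jid.
  by rewrite jC; apply: jle; exact: ab_ge0.
rewrite e in h.
by have := congr1 (fun v => v - (pos x + neg x)) h; rewrite addrK subrr.
Qed.

Lemma decomp z a : mt z a + pos (z - a) = z.
Proof.
have h := mjsum z a.
have -> : pos (z - a) = jn z a - a by rewrite /pos -jD subrr.
by rewrite addrA h addrK.
Qed.

Lemma norm_mono x y : ab x <=: ab y -> `|x| <= `|y|. Proof. exact: bnorm_mono. Qed.
Lemma norm_le a b : 0 <=: a -> a <=: b -> `|a| <= `|b|.
Proof.
move=> h0 h; apply: norm_mono; rewrite !ab_id //; exact: ltr h0 h.
Qed.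
Lemma norm_pos x : `|pos x| <= `|x|.
Proof. by apply: norm_mono; rewrite ab_id ?pos_ge0 //; apply: pos_le_ab. Qed.
Lemma norm_neg x : `|neg x| <= `|x|.
Proof. by apply: norm_mono; rewrite ab_id ?neg_ge0 //; apply: neg_le_ab. Qed.
Lemma norm_ab x : `|ab x| = `|x|.
Proof.
by apply/eqP; rewrite eq_le; apply/andP; split; apply: norm_mono;
  rewrite (ab_id (ab_ge0 x)); apply: lrefl.
Qed.

Lemma msubadd u b c : 0 <=: u -> 0 <=: b -> 0 <=: c -> mt u (b + c) <=: mt u b + mt u c.
Proof.
move=> hu hb hc.
have h1 : mt u (b + c) <=: mt u b + c.
  rewrite -{1}[u](subrK c) mD; apply: laddr; apply: mmono; last exact: lrefl.
  by rewrite -{2}[u]addr0; apply: laddl; rewrite -oppr0; apply: lopp.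
have h2 : mt u (b + c) <=: mt u b + u.
  apply: ltr (mlbl _ _) _; rewrite -{1}[u]add0r; apply: laddr.
  exact: mglb.
apply: ltr (mglb h1 h2) _.
by rewrite ![mt u b + _]addrC mD [mt c u]mC addrC; apply: lrefl.
Qed.
Lemma msuperadd a b s t : mt a s + mt b t <=: mt (a + b) (s + t).
Proof. by apply: mglb; apply: ladd; [apply: mlbl|apply: mlbl|apply: mlbr|apply: mlbr]. Qed.
Lemma m_ge0 a b : 0 <=: a -> 0 <=: b -> 0 <=: mt a b.
Proof. exact: mglb. Qed.

Lemma disj_add u v : 0 <=: u -> 0 <=: v -> mt u v = 0 -> u + v = jn u v.
Proof. by move=> _ _ h; rewrite -mjsum h add0r. Qed.

Lemma disj_crit (al : R) p q : 0 < al -> al *: p + q <=: 0 ->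
  mt (pos p) (pos q) = 0.
Proof.
move=> a0 h.
have hq : q <=: al *: (- p).
  by have := laddr (- (al *: p)) h; rewrite addrC addKr add0r scalerN.
have hq' : pos q <=: al *: neg p.
  by rewrite negE -posZ ?ltW //; apply: pos_mono.
set be := 1 + al.
have b0 : 0 <= be by rewrite /be addr_ge0 // ltW.
have hp : pos p <=: be *: pos p.
  by rewrite -{1}[pos p]scale1r; apply: lscalel; rewrite ?pos_ge0 // /be lerDl ltW.
have hn : al *: neg p <=: be *: neg p.
  by apply: lscalel; rewrite ?neg_ge0 // /be lerDr.
apply: lanti; last by apply: m_ge0; apply: pos_ge0.
apply: ltr (mmono hp (ltr hq' hn)) _.
by rewrite mZ // pos_meet_neg scaler0; apply: lrefl.
Qed.

Lemma disj_sum (n : nat) (w : nat -> E) a :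
  (forall k, 0 <=: w k) -> (forall k, w k <=: a) ->
  (forall j k, (j < k)%N -> mt (w j) (w k) = 0) ->
  0 <=: a -> \sum_(k < n) w k <=: a.
Proof.
move=> w0 wa wd a0.
have S0 : forall m, 0 <=: \sum_(k < m) w k by move=> m; apply: lsum.
have Sd : forall m i, (m <= i)%N -> mt (\sum_(k < m) w k) (w i) = 0.
  elim=> [|m IH] i im; first by rewrite big_ord0 mle.
  apply: lanti; last by apply: m_ge0.
  rewrite big_ord_recr /= mC.
  apply: ltr (msubadd (w0 _) (S0 _) (w0 _)) _.
  rewrite mC IH ?(leq_trans _ im) // add0r mC wd //; exact: lrefl.
elim: n => [|n IH]; first by rewrite big_ord0.
by rewrite big_ord_recr /= (disj_add (S0 n) (w0 n) (Sd _ _ (leqnn n))); apply: jlub.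
Qed.

Lemma cone_closed (w : nat -> E) (l : E) :
  w @ \oo --> l -> (forall n, 0 <=: w n) -> 0 <=: l.
Proof.
move=> cw w0.
have hn : forall n, `|neg l| <= `|w n - l|.
  move=> n; apply: norm_mono; rewrite (ab_id (neg_ge0 l)).
  apply: ltr (pos_le_ab _); apply: pos_mono.
  by rewrite -{1}[- l]add0r; apply: laddr.
have nl : neg l = 0.
  apply/normr0_eq0; apply/eqP; rewrite eq_le normr_ge0 andbT.
  apply/ler_addgt0Pr => e e0; rewrite add0r.
  move/cvgr_dist_le: cw => /(_ e e0) [N _ HN].
  by apply: le_trans (hn N) _; rewrite -normrN opprB; apply: HN => /=.
by rewrite -(posBneg l) nl subr0; apply: pos_ge0.
Qed.

End Lat.
Section Fun.
Variables (R : realType) (E : completeNormedModType R) (L : banach_lattice E).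
Local Notation "x <=: y" := (ble L x y) (at level 70).
Local Notation jn := (bjoin L).
Local Notation mt := (bmeet L).
Local Notation ab := (babs L).
Local Notation pos := (pos L).
Local Notation neg := (neg L).
Local Hint Resolve jubl jubr lrefl pos_ge0 neg_ge0 ab_ge0 mlbl mlbr : core.

Lemma zid (V : zmodType) (a b c d : V) : a - b + (c - d) = - b + c + (a - d).
Proof. by rewrite [RHS]addrC [-b + c]addrC [LHS]addrACA [RHS]addrACA [-d + -b]addrC. Qed.

Section DualFacts.
Variable f : E -> R.
Hypothesis hf : is_dual f.
Lemma fD x y : f (x + y) = f x + f y.
Proof. by have := hf.1 1 x y; rewrite scale1r mul1r. Qed.
Lemma f0 : f 0 = 0.
Proof.
have h := fD 0 0; rewrite addr0 in h.
have : f 0 + f 0 = f 0 + 0 by rewrite addr0 -h.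
by move/addrI.
Qed.
Lemma fZ a x : f (a *: x) = a * f x.
Proof. by have := hf.1 a x 0; rewrite !addr0 f0 addr0. Qed.
Lemma fN x : f (- x) = - f x.
Proof. by rewrite -scaleN1r fZ mulN1r. Qed.
Lemma fB x y : f (x - y) = f x - f y.
Proof. by rewrite fD fN. Qed.
Lemma fsum n (F : nat -> E) : f (\sum_(k < n) F k) = \sum_(k < n) f (F k).
Proof.
elim: n => [|n IH]; first by rewrite !big_ord0 f0.
by rewrite !big_ord_recr /= fD IH.
Qed.
Lemma dual_bound : exists C, 0 < C /\ forall z, `|f z| <= C * `|z|.
Proof.
have := hf.2 0 => /cvgr_dist_lt /(_ 1 ltr01) /nbhs_norm0P [e /= e0 He].
exists (2 / e); split; first by rewrite divr_gt0.
move=> z; have [->|z0] := eqVneq z 0; first by rewrite f0 normr0 normr0 mulr0.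
have nz : 0 < `|z| by rewrite normr_gt0.
set c := e / (2 * `|z|).
have c0 : 0 < c by rewrite /c divr_gt0 // mulr_gt0.
have : `|f 0 - f (c *: z)| < 1.
  apply: He => /=; rewrite normrZ gtr0_norm // /c.
  have -> : e / (2 * `|z|) * `|z| = e / 2.
    by field; rewrite gt_eqF.
  by lra.
rewrite f0 sub0r normrN fZ normrM gtr0_norm // => h.
have : `|f z| < c^-1 by rewrite -(ltr_pM2l c0) mulfV ?gt_eqF.
have -> : c^-1 = 2 / e * `|z|.
  by rewrite /c; field; rewrite gt_eqF // gt_eqF.
exact: ltW.
Qed.
End DualFacts.

Section Ext.
Variable p : E -> R.
Variable C : R.
Hypothesis padd : forall a b, 0 <=: a -> 0 <=: b -> p (a + b) = p a + p b.
Hypothesis pscale : forall (c : R) a, 0 < c -> 0 <=: a -> p (c *: a) = c * p a.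
Hypothesis hC : 0 <= C.
Hypothesis pbound : forall a, 0 <=: a -> 0 <= p a /\ p a <= C * `|a|.

Definition ext z := p (pos z) - p (neg z).

Lemma p0 : p 0 = 0.
Proof.
have h := padd (lrefl L 0) (lrefl L 0); rewrite addr0 in h.
have : p 0 + p 0 = p 0 + 0 by rewrite addr0 -h.
by move/addrI.
Qed.
Lemma pscale0 (c : R) a : 0 <= c -> 0 <=: a -> p (c *: a) = c * p a.
Proof.
rewrite le0r => /orP[/eqP->|c0] ha; first by rewrite scale0r mul0r p0.
exact: pscale.
Qed.
Lemma ext_diff z a b : 0 <=: a -> 0 <=: b -> z = a - b -> ext z = p a - p b.
Proof.
move=> ha hb e.
have e2 : pos z + b = a + neg z.
  have h : pos z - neg z = a - b by rewrite posBneg.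
  by rewrite -[pos z](subrK (neg z)) h addrAC subrK.
have := congr1 p e2; rewrite !padd // => e3.
by rewrite /ext; apply/eqP; rewrite subr_eq addrAC eq_sym subr_eq e3 addrC.
Qed.
Lemma ext_pos a : 0 <=: a -> ext a = p a.
Proof.
by move=> ha; rewrite (@ext_diff a a 0 ha (lrefl L 0)); [rewrite p0 subr0|rewrite subr0].
Qed.
Lemma ext_bound z : `|ext z| <= 2 * C * `|z|.
Proof.
rewrite /ext; apply: le_trans (ler_normB _ _) _.
have [h1 h2] := pbound (pos_ge0 L z); have [h3 h4] := pbound (neg_ge0 L z).
rewrite !ger0_norm //.
have := ler_wpM2l hC (norm_pos L z); have := ler_wpM2l hC (norm_neg L z).
by lra.
Qed.

Lemma ext_lin (c : R) x y : ext (c *: x + y) = c * ext x + ext y.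
Proof.
have hx := pos_ge0 L x; have hx' := neg_ge0 L x.
have hy := pos_ge0 L y; have hy' := neg_ge0 L y.
have [c0|c0] := lerP 0 c.
  have a1 : 0 <=: c *: pos x by apply: lscale0.
  have a2 : 0 <=: c *: neg x by apply: lscale0.
  rewrite (@ext_diff (c *: x + y) (c *: pos x + pos y) (c *: neg x + neg y)).
  - rewrite !padd // !pscale0 // /ext; lra.
  - exact: ladd0.
  - exact: ladd0.
  - rewrite -{1}(posBneg L x) -{1}(posBneg L y) scalerBr.
    by rewrite opprD addrACA.
have d0 : 0 < - c by rewrite oppr_gt0.
have a1 : 0 <=: (- c) *: pos x by apply: lscale0 => //; exact: ltW.
have a2 : 0 <=: (- c) *: neg x by apply: lscale0 => //; exact: ltW.
rewrite (@ext_diff (c *: x + y) ((- c) *: neg x + pos y) ((- c) *: pos x + neg y)).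
- rewrite !padd // !pscale // /ext; lra.
- exact: ladd0.
- exact: ladd0.
- rewrite -{1}(posBneg L x) -{1}(posBneg L y) scalerBr !scaleNr opprD opprK.
  exact: zid.
Qed.

Lemma ext_dual : is_dual ext.
Proof.
split; first exact: ext_lin.
have extB : forall x z, ext x - ext z = ext (x - z).
  by move=> x z; have := ext_lin (-1) z x; rewrite scaleN1r addrC => ->; lra.
move=> x; apply/(@cvgrPdist_lt _ _ _ (nbhs x)) => e e0.
have K0 : 0 < 2 * C + 1 by have := hC; lra.
near=> z; rewrite extB (le_lt_trans (ext_bound _)) //.
have : `|x - z| < e / (2 * C + 1).
  by near: z; apply: cvgr_dist_lt => //; rewrite divr_gt0.
rewrite ltr_pdivlMr // => h.
have := normr_ge0 (x - z).
nra.
Unshelve. all: by end_near.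
Qed.

Lemma ext_ge0 : dual_le L (fun _ => 0) ext.
Proof. by move=> a ha; rewrite ext_pos //; case: (pbound ha). Qed.
End Ext.
End Fun.
Section Sup.
Variable R : realType.
Definition supf (T : Type) (P : T -> Prop) (h : T -> R) := sup [set h w | w in P].
Lemma supf_ub T (P : T -> Prop) h B w : (forall w, P w -> h w <= B) -> P w -> h w <= supf P h.
Proof.
move=> hB Pw; apply: ub_le_sup; last by exists w.
by exists B => _ [v Pv <-]; apply: hB.
Qed.
Lemma supf_le T (P : T -> Prop) h B w0 : P w0 -> (forall w, P w -> h w <= B) -> supf P h <= B.
Proof.
move=> P0 hB; apply: ge_sup; first by exists (h w0), w0.
by move=> _ [v Pv <-]; apply: hB.
Qed.
Lemma supf_adh T (P : T -> Prop) h B w0 (eps : R) : 0 < eps -> P w0 ->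
  (forall w, P w -> h w <= B) -> exists2 w, P w & supf P h - eps < h w.
Proof.
move=> e0 P0 hB.
have hs : has_sup [set h w | w in P].
  by split; [exists (h w0), w0 | exists B => _ [v Pv <-]; apply: hB].
by have [_ [w Pw <-] hw] := sup_adherent e0 hs; exists w.
Qed.
End Sup.

Section Funs.
Variables (R : realType) (E : completeNormedModType R) (L : banach_lattice E).
Local Notation "x <=: y" := (ble L x y) (at level 70).
Local Notation jn := (bjoin L).
Local Notation mt := (bmeet L).
Local Notation ab := (babs L).
Local Notation pos := (pos L).
Local Notation neg := (neg L).
Local Hint Resolve jubl jubr lrefl pos_ge0 neg_ge0 ab_ge0 mlbl mlbr : core.

Definition posdual (g : E -> R) := is_dual g /\ dual_le L (fun _ => 0) g.

Lemma pd_mono g : posdual g -> forall a b, a <=: b -> g a <= g b.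
Proof.
move=> [hg hp] a b h; have := hp _ (lsub0 h).
by rewrite fB // subr_ge0.
Qed.

(* Riesz-Kantorovich positive part *)
Section RK.
Variable g : E -> R.
Hypothesis hg : is_dual g.
Variable Cg : R.
Hypothesis Cg0 : 0 < Cg.
Hypothesis hCg : forall z, `|g z| <= Cg * `|z|.

Definition rk a := supf (fun w => 0 <=: w /\ w <=: a) g.

Lemma rk_bnd a w : 0 <=: w /\ w <=: a -> g w <= Cg * `|a|.
Proof.
move=> [h0 h1]; apply: le_trans (ler_norm _) _; apply: le_trans (hCg _) _.
by apply: ler_wpM2l; [exact: (ltW Cg0)|exact: (norm_le h0 h1)].
Qed.
Lemma rk_ub a w : 0 <=: w -> w <=: a -> g w <= rk a.
Proof. by move=> h0 h1; apply: (@supf_ub _ _ _ _ (Cg * `|a|)) => //; apply: rk_bnd. Qed.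
Lemma rk_le a B : 0 <=: a -> (forall w, 0 <=: w -> w <=: a -> g w <= B) -> rk a <= B.
Proof. by move=> ha hB; apply: (@supf_le _ _ _ _ _ 0) => // w []; apply: hB. Qed.
Lemma rk_ge0 a : 0 <=: a -> 0 <= rk a.
Proof. by move=> ha; rewrite -(f0 hg); apply: rk_ub. Qed.
Lemma rk_ge a : 0 <=: a -> g a <= rk a.
Proof. by move=> ha; apply: rk_ub. Qed.
Lemma rk_leC a : 0 <=: a -> rk a <= Cg * `|a|.
Proof. by move=> ha; apply: rk_le => // w h0 h1; apply: rk_bnd. Qed.
Lemma rk_add a b : 0 <=: a -> 0 <=: b -> rk (a + b) = rk a + rk b.
Proof.
move=> ha hb; apply/eqP; rewrite eq_le; apply/andP; split.
  apply: rk_le; first exact: ladd0.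
  move=> w h0 h1; rewrite -(decomp L w a) (fD hg); apply: lerD.
    by apply: rk_ub; [apply: m_ge0|apply: mlbr].
  apply: rk_ub => //; apply: jlub => //.
  by have := laddr (- a) h1; rewrite addrAC subrr add0r.
rewrite -lerBrDr; apply: rk_le => // w1 h10 h11.
rewrite lerBrDr addrC -lerBrDr; apply: rk_le => // w2 h20 h21.
rewrite lerBrDr addrC -(fD hg); apply: rk_ub; first exact: ladd0.
exact: ladd.
Qed.
Lemma rk_scale (c : R) a : 0 < c -> 0 <=: a -> rk (c *: a) = c * rk a.
Proof.
move=> c0 ha; have cn := lt0r_neq0 c0.
have ci : 0 <= c^-1 by rewrite invr_ge0 ltW.
apply/eqP; rewrite eq_le; apply/andP; split.
  apply: rk_le; first by apply: lscale0 => //; exact: ltW.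
  move=> w h0 h1; rewrite -[w](scalerKV cn) (fZ hg) ler_pM2l //.
  apply: rk_ub; first exact: lscale0.
  by rewrite -[a](scalerK cn); apply: lscale.
rewrite -ler_pdivlMl //; apply: rk_le => // w h0 h1.
rewrite ler_pdivlMl // -(fZ hg); apply: rk_ub; first by apply: lscale0 => //; exact: ltW.
by apply: lscale => //; exact: ltW.
Qed.

Definition gp := ext L rk.
Definition gm := ext L (fun a => rk a - g a).

Lemma rk_pb a : 0 <=: a -> 0 <= rk a /\ rk a <= Cg * `|a|.
Proof. by move=> ha; split; [apply: rk_ge0|apply: rk_leC]. Qed.
Lemma gp_pd : posdual gp.
Proof.
have hC : 0 <= Cg by exact: ltW.
split; first exact: (ext_dual (p:=rk) (C:=Cg) rk_add rk_scale hC rk_pb).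
exact: (ext_ge0 (p:=rk) (C:=Cg) rk_add rk_pb).
Qed.
Lemma gm_add a b : 0 <=: a -> 0 <=: b ->
  rk (a + b) - g (a + b) = (rk a - g a) + (rk b - g b).
Proof. by move=> ha hb; rewrite rk_add // (fD hg); lra. Qed.
Lemma gm_sc (c : R) a : 0 < c -> 0 <=: a -> rk (c *: a) - g (c *: a) = c * (rk a - g a).
Proof. by move=> c0 ha; rewrite rk_scale // (fZ hg); lra. Qed.
Lemma gm_pb a : 0 <=: a -> 0 <= rk a - g a /\ rk a - g a <= 2 * Cg * `|a|.
Proof.
move=> ha; have := rk_ge ha; have := rk_leC ha; have := hCg a.
have := normr_ge0 a; rewrite ler_norml; lra.
Qed.
Lemma gm_pd : posdual gm.
Proof.
have hC : 0 <= 2 * Cg by rewrite mulr_ge0 // ltW.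
split; first exact: (ext_dual (p:=fun a => rk a - g a) (C:=2 * Cg) gm_add gm_sc hC gm_pb).
exact: (ext_ge0 (p:=fun a => rk a - g a) (C:=2 * Cg) gm_add gm_pb).
Qed.
Lemma gpE a : 0 <=: a -> gp a = rk a.
Proof. exact: (ext_pos (p:=rk) rk_add). Qed.
Lemma gmE a : 0 <=: a -> gm a = rk a - g a.
Proof. exact: (ext_pos (p:=fun a => rk a - g a) gm_add). Qed.
End RK.
End Funs.
Section Phi.
Variables (R : realType) (E : completeNormedModType R) (L : banach_lattice E).
Local Notation "x <=: y" := (ble L x y) (at level 70).
Local Notation jn := (bjoin L).
Local Notation mt := (bmeet L).
Local Notation pos := (pos L).
Local Notation neg := (neg L).
Local Hint Resolve jubl jubr lrefl pos_ge0 neg_ge0 ab_ge0 mlbl mlbr : core.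

Variable g : E -> R.
Hypothesis hg : posdual L g.
Variable Cg : R.
Hypothesis Cg0 : 0 < Cg.
Hypothesis hCg : forall z, `|g z| <= Cg * `|z|.

Lemma g_le a : g a <= Cg * `|a|.
Proof. exact: le_trans (ler_norm _) (hCg a). Qed.

Section OneE.
Variable e : E.
Hypothesis e0 : 0 <=: e.

Definition ph a := supf (fun t : R => 0 <= t) (fun t => g (mt a (t *: e))).

Lemma ph_bnd a t : 0 <=: a -> 0 <= t -> g (mt a (t *: e)) <= g a.
Proof. by move=> ha _; apply: (pd_mono hg). Qed.
Lemma ph_ub a t : 0 <=: a -> 0 <= t -> g (mt a (t *: e)) <= ph a.
Proof. by move=> ha t0; apply: (@supf_ub _ _ _ _ (g a)) => // s s0; apply: ph_bnd. Qed.
Lemma ph_le a B : 0 <=: a -> (forall t, 0 <= t -> g (mt a (t *: e)) <= B) -> ph a <= B.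
Proof. by move=> ha hB; apply: (@supf_le _ _ _ _ _ 0) => //. Qed.
Lemma ph_adh a eps : 0 <=: a -> 0 < eps ->
  exists2 t, 0 <= t & ph a - eps < g (mt a (t *: e)).
Proof.
move=> ha ep; apply: (@supf_adh _ _ _ _ (g a) 0) => // s s0; exact: ph_bnd.
Qed.
Lemma ph_ge0 a : 0 <=: a -> 0 <= ph a.
Proof.
move=> ha; have := ph_ub ha (lexx 0).
by rewrite scale0r mC mle // (f0 hg.1).
Qed.
Lemma ph_leg a : 0 <=: a -> ph a <= g a.
Proof. by move=> ha; apply: ph_le => // t t0; apply: ph_bnd. Qed.
Lemma ph_pb a : 0 <=: a -> 0 <= ph a /\ ph a <= Cg * `|a|.
Proof. by move=> ha; split; [apply: ph_ge0|apply: le_trans (ph_leg ha) (g_le a)]. Qed.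
Lemma ph_add a b : 0 <=: a -> 0 <=: b -> ph (a + b) = ph a + ph b.
Proof.
move=> ha hb; apply/eqP; rewrite eq_le; apply/andP; split.
  apply: ph_le; first exact: ladd0.
  move=> t t0; have te : 0 <=: t *: e by apply: lscale0.
  apply: (le_trans ((pd_mono hg) _ (mt (t *: e) a + mt (t *: e) b) _)).
    by rewrite mC; exact: msubadd te ha hb.
  by rewrite (fD hg.1) ![mt (t *: e) _]mC; apply: lerD; apply: ph_ub.
rewrite -lerBrDr; apply: ph_le => // s s0.
rewrite lerBrDr addrC -lerBrDr; apply: ph_le => // t t0.
rewrite lerBrDr addrC -(fD hg.1).
apply: le_trans (ph_ub (ladd0 ha hb) (addr_ge0 s0 t0)).
by apply: (pd_mono hg); rewrite scalerDl; apply: msuperadd.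
Qed.
Lemma ph_scale (c : R) a : 0 < c -> 0 <=: a -> ph (c *: a) = c * ph a.
Proof.
move=> c0 ha; have cn := lt0r_neq0 c0.
have ca : 0 <=: c *: a by apply: lscale0 => //; exact: ltW.
have key : forall t, mt (c *: a) (t *: e) = c *: mt a ((t / c) *: e).
  by move=> t; rewrite -mZ ?ltW // scalerA mulrC divfK.
apply/eqP; rewrite eq_le; apply/andP; split.
  apply: ph_le => // t t0; rewrite key (fZ hg.1) ler_pM2l //.
  by apply: ph_ub => //; rewrite divr_ge0 // ltW.
rewrite -ler_pdivlMl //; apply: ph_le => // t t0.
rewrite ler_pdivlMl // -(fZ hg.1).
have := ph_ub ca (mulr_ge0 t0 (ltW c0)); rewrite key.
by rewrite mulfK.
Qed.

Definition phi := ext L ph.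
Lemma phi_pd : posdual L phi.
Proof.
have hC : 0 <= Cg by exact: ltW.
split; first exact: (ext_dual (p:=ph) (C:=Cg) ph_add ph_scale hC ph_pb).
exact: (ext_ge0 (p:=ph) (C:=Cg) ph_add ph_pb).
Qed.
Lemma phiE a : 0 <=: a -> phi a = ph a.
Proof. exact: (ext_pos (p:=ph) ph_add). Qed.
Lemma phi_self : g e <= phi e.
Proof.
rewrite phiE //; have := ph_ub e0 ler01.
by rewrite scale1r mid.
Qed.
End OneE.

Lemma phi_sum (es : nat -> E) (n : nat) a :
  (forall k, 0 <=: es k) -> (forall j k, (j < k)%N -> mt (es j) (es k) = 0) ->
  0 <=: a -> \sum_(k < n) phi (es k) a <= g a.
Proof.
move=> es0 dis ha.
have approx : forall eps, 0 < eps -> exists2 t, 0 <= t &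
    \sum_(k < n) phi (es k) a <= \sum_(k < n) g (mt a (t *: es k)) + eps.
  elim: n => [|n IH] eps ep.
    by exists 0 => //; rewrite !big_ord0 add0r ltW.
  have ep2 : 0 < eps / 2 by rewrite divr_gt0.
  have [t1 t10 h1] := IH _ ep2.
  have [t2 t20 h2] := ph_adh (es n) ha ep2.
  exists (Num.max t1 t2); first by rewrite le_max t10.
  rewrite !big_ord_recr /= phiE //.
  have m1 : \sum_(k < n) g (mt a (t1 *: es k)) <= \sum_(k < n) g (mt a (Num.max t1 t2 *: es k)).
    apply: ler_sum => k _; apply: (pd_mono hg) => //; apply: mmono => //.
    by apply: lscalel => //; rewrite le_max lexx.
  have m2 : g (mt a (t2 *: es n)) <= g (mt a (Num.max t1 t2 *: es n)).
    apply: (pd_mono hg) => //; apply: mmono => //.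
    by apply: lscalel => //; rewrite le_max lexx orbT.
  lra.
apply/ler_addgt0Pr => eps ep.
have [t t0 h] := approx eps ep; apply: le_trans h _; rewrite lerD2r.
rewrite -(fsum hg.1 n (fun k => mt a (t *: es k))); apply: (pd_mono hg) => //.
apply: (@disj_sum _ _ L n (fun k => mt a (t *: es k))) => //.
- by move=> k; apply: m_ge0 => //; apply: lscale0.
- move=> j k jk; apply: lanti; last by apply: m_ge0; apply: m_ge0 => //; apply: lscale0.
  apply: (ltr (mmono (mlbr L _ _) (mlbr L _ _))).
  by rewrite mZ // dis // scaler0.
Qed.
End Phi.
Section Tail.
Variables (R : realType) (E : completeNormedModType R) (L : banach_lattice E).
Local Notation "x <=: y" := (ble L x y) (at level 70).
Local Notation mt := (bmeet L).
Local Hint Resolve jubl jubr lrefl pos_ge0 neg_ge0 ab_ge0 mlbl mlbr : core.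

Variable g : E -> R.
Hypothesis hg : posdual L g.
Variable Cg : R.
Hypothesis Cg0 : 0 < Cg.
Hypothesis hCg : forall z, `|g z| <= Cg * `|z|.
Variable phs : nat -> E -> R.
Hypothesis phs_pd : forall k, posdual L (phs k).
Hypothesis phs_sum : forall n a, 0 <=: a -> \sum_(k < n) phs k a <= g a.

Definition Ps a n := \sum_(k < n) phs k a.
Definition ss a := sup (range (Ps a)).

Lemma Ps_nd a : 0 <=: a -> nondecreasing_seq (Ps a).
Proof.
move=> ha; apply/nondecreasing_seqP => n.
by rewrite /Ps big_ord_recr /= lerDl; apply: (phs_pd n).2.
Qed.
Lemma Ps_ub a : 0 <=: a -> has_ubound (range (Ps a)).
Proof. by move=> ha; exists (g a) => _ [n _ <-]; apply: phs_sum. Qed.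
Lemma Ps_cvg a : 0 <=: a -> Ps a @ \oo --> ss a.
Proof. by move=> ha; apply: nondecreasing_cvgn; [apply: Ps_nd|apply: Ps_ub]. Qed.
Lemma Ps_le a n : 0 <=: a -> Ps a n <= ss a.
Proof. by move=> ha; apply: ub_le_sup; [apply: Ps_ub|exists n]. Qed.
Lemma ss_le a : 0 <=: a -> ss a <= g a.
Proof.
by move=> ha; apply: ge_sup; [exists (Ps a 0), 0|move=> _ [n _ <-]; apply: phs_sum].
Qed.
Lemma Ps_add a b n : Ps (a + b) n = Ps a n + Ps b n.
Proof. by rewrite /Ps -big_split /=; apply: eq_bigr => k _; rewrite (fD (phs_pd k).1). Qed.
Lemma Ps_scale c a n : Ps (c *: a) n = c * Ps a n.
Proof. by rewrite /Ps mulr_sumr; apply: eq_bigr => k _; rewrite (fZ (phs_pd k).1). Qed.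
Lemma ss_add a b : 0 <=: a -> 0 <=: b -> ss (a + b) = ss a + ss b.
Proof.
move=> ha hb.
have h1 : Ps (a + b) @ \oo --> ss a + ss b.
  have -> : Ps (a + b) = Ps a + Ps b by apply/funext => n; rewrite Ps_add.
  by apply: cvgD; apply: Ps_cvg.
have h2 := Ps_cvg (ladd0 ha hb).
exact: (cvg_unique _ h2 h1).
Qed.
Lemma ss_scale (c : R) a : 0 < c -> 0 <=: a -> ss (c *: a) = c * ss a.
Proof.
move=> c0 ha.
have h1 : Ps (c *: a) @ \oo --> c * ss a.
  have -> : Ps (c *: a) = (fun n => c * Ps a n) by apply/funext => n; rewrite Ps_scale.
  by apply: cvgMl_tmp; apply: Ps_cvg.
have h2 := Ps_cvg (lscale0 (ltW c0) ha).
exact: (cvg_unique _ h2 h1).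
Qed.

Section FixN.
Variable n : nat.
Definition tq a := ss a - Ps a n.
Lemma tq_add a b : 0 <=: a -> 0 <=: b -> tq (a + b) = tq a + tq b.
Proof. by move=> ha hb; rewrite /tq ss_add // Ps_add; lra. Qed.
Lemma tq_scale (c : R) a : 0 < c -> 0 <=: a -> tq (c *: a) = c * tq a.
Proof. by move=> c0 ha; rewrite /tq ss_scale // Ps_scale; lra. Qed.
Lemma tq_pb a : 0 <=: a -> 0 <= tq a /\ tq a <= Cg * `|a|.
Proof.
move=> ha; rewrite /tq; have := Ps_le n ha; have := ss_le ha.
have := le_trans (ler_norm _) (hCg a); have : 0 <= Ps a n.
  by rewrite /Ps sumr_ge0 // => k _; apply: (phs_pd k).2.
lra.
Qed.
Definition ft := ext L tq.
Lemma ft_dual : is_dual ft.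
Proof. exact: (ext_dual (p:=tq) (C:=Cg) tq_add tq_scale (ltW Cg0) tq_pb). Qed.
Lemma ft_ge0 : dual_le L (fun _ => 0) ft.
Proof. exact: (ext_ge0 (p:=tq) (C:=Cg) tq_add tq_pb). Qed.
Lemma ftE a : 0 <=: a -> ft a = ss a - Ps a n.
Proof. exact: (ext_pos (p:=tq) tq_add). Qed.
End FixN.

Lemma tail_small : dual_order_continuous L ->
  forall eps, 0 < eps -> exists i0 : nat, forall i, (i0 <= i)%N ->
    forall x : E, `|x| <= 1 -> `|ft i x| <= eps.
Proof.
move=> doc eps ep.
apply: (doc nat (fun i j => (i <= j)%N) _ _ (inhabits 0%N) _ ft) => //.
- by move=> i j k; apply: leq_trans.
- by move=> i j; exists (maxn i j); rewrite leq_maxl leq_maxr.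
- by move=> i; apply: ft_dual.
- move=> i j ij a ha; rewrite !ftE // lerD2l lerN2.
  exact: Ps_nd.
- by move=> i; apply: ft_ge0.
move=> h hd hle a ha /=.
apply/ler_addgt0Pr => e e0; rewrite add0r.
have := Ps_cvg ha => /cvgr_dist_lt /(_ e e0) [N _ HN].
have := HN N (leqnn N); have := hle N a ha; rewrite ftE //.
move=> h1 h2; apply: le_trans h1 _.
by apply: ltW; apply: le_lt_trans (ler_norm _) h2.
Qed.
End Tail.
Section Main.
Variables (R : realType) (E : completeNormedModType R) (L : banach_lattice E).
Local Notation "x <=: y" := (ble L x y) (at level 70).
Local Notation jn := (bjoin L).
Local Notation mt := (bmeet L).
Local Notation pos := (pos L).
Local Hint Resolve jubl jubr lrefl pos_ge0 neg_ge0 ab_ge0 mlbl mlbr : core.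

Lemma sum_ge_term (F : nat -> E) N k : (forall i, 0 <=: F i) -> (k < N)%N ->
  F k <=: \sum_(i < N) F i.
Proof.
move=> F0; elim: N => [//|N IH]; rewrite ltnS leq_eqVlt => /orP[/eqP->|kN].
  rewrite big_ord_recr /= -{1}[F N]add0r; apply: laddr; exact: lsum.
rewrite big_ord_recr /= -[F k]addr0; apply: ladd; [exact: IH|exact: F0].
Qed.

Lemma cone_closed_ev (w : nat -> E) (l : E) N0 :
  w @ \oo --> l -> (forall n, (N0 <= n)%N -> 0 <=: w n) -> 0 <=: l.
Proof.
move=> cw w0.
have hn : forall n, (N0 <= n)%N -> `|neg L l| <= `|w n - l|.
  move=> n Nn; apply: (norm_mono (L:=L)); rewrite (ab_id (neg_ge0 L l)).
  apply: ltr (pos_le_ab _ _); apply: pos_mono.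
  by rewrite -{1}[- l]add0r; apply: laddr; apply: w0.
have nl : neg L l = 0.
  apply/normr0_eq0; apply/eqP; rewrite eq_le normr_ge0 andbT.
  apply/ler_addgt0Pr => e e0; rewrite add0r.
  move/cvgr_dist_le: cw => /(_ e e0) [N _ HN].
  apply: le_trans (hn (maxn N N0) (leq_maxr _ _)) _.
  by rewrite -normrN opprB; apply: HN; rewrite /= leq_maxl.
by rewrite -(posBneg L l) nl subr0; apply: pos_ge0.
Qed.

Fixpoint stp (pick : nat -> E -> nat) (y : nat -> E) (k : nat) : nat * E :=
  match k with
  | 0%N => (pick 0%N 0, 0)
  | k'.+1 => let V := (stp pick y k').2 + y (stp pick y k').1 in (pick k'.+1 V, V)
  end.

Lemma stp1 pick y k : (stp pick y k).1 = pick k (stp pick y k).2.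
Proof. by case: k. Qed.
Lemma stp2 pick y k : (stp pick y k).2 = \sum_(j < k) y (stp pick y j).1.
Proof.
elim: k => [|k IH]; first by rewrite big_ord0.
by rewrite big_ord_recr /= IH.
Qed.

Hypothesis doc : dual_order_continuous L.

Lemma main_pos (g : E -> R) (y : nat -> E) (M : R) :
  posdual L g ->
  (forall n, 0 <=: y n) -> (forall n, `|y n| <= M) ->
  (forall u, 0 <=: u -> (fun n => g (mt (y n) u)) @ \oo --> 0) ->
  (fun n => g (y n)) @ \oo --> 0.
Proof.
move=> hg y0 yM yu.
have [Cg [Cg0 hCg]] := dual_bound hg.1.
have M0 : 0 <= M by apply: le_trans (yM 0%N).
have gy0 : forall n, 0 <= g (y n) by move=> n; apply: hg.2.
suff key : forall d, 0 < d -> exists N, forall n, (N <= n)%N -> g (y n) <= d.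
  apply/cvgrPdist_le => d d0; have [N HN] := key d d0.
  by exists N => // n /= Nn; rewrite sub0r normrN ger0_norm //; apply: HN.
move=> d d0.
have [//|H] := pselect (exists N, forall n, (N <= n)%N -> g (y n) <= d).
exfalso.
have io : forall N, exists n, (N <= n)%N /\ d < g (y n).
  move=> N; have [//|Hn] := pselect (exists n, (N <= n)%N /\ d < g (y n)).
  exfalso; apply: H; exists N => n Nn; rewrite leNgt; apply/negP => lt.
  by apply: Hn; exists n.
have pk : forall v : E, {n | d < g (y n) /\ (0 <=: v -> g (mt (y n) v) < d / 4)}.
  move=> v; apply: cid.
  have [v0|nv0] := pselect (0 <=: v).
    have d4 : 0 < d / 4 by rewrite divr_gt0.
    move: (yu v v0) => /cvgr_dist_lt /(_ _ d4) [N _ HN].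
    have [n [Nn hn]] := io N; exists n; split => // _.
    by have := HN n Nn; rewrite sub0r normrN => /(le_lt_trans (ler_norm _)).
  by have [n [_ hn]] := io 0%N; exists n.
pose r : R := 2^-1.
have r0 : 0 < r by rewrite /r invr_gt0.
have r1 : r < 1 by rewrite /r invf_lt1 // ltr1n.
pose w k := r ^+ k.
have w0 : forall k, 0 < w k by move=> k; rewrite /w exprn_gt0.
have wdec : forall j k, (j <= k)%N -> w k <= w j.
  by move=> j k jk; rewrite /w ler_wiXn2l // ?ltW // r0 ltW.
pose Ck k := ((w k) ^+ 2)^-1.
have Ck0 : forall k, 0 < Ck k by move=> k; rewrite /Ck invr_gt0 exprn_gt0.
pose pick k V := sval (pk (Ck k *: V)).
pose st := stp pick y.
pose V k := (st k).2.
pose z k := y (st k).1.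
have z0 : forall k, 0 <=: z k by move=> k; apply: y0.
have zM : forall k, `|z k| <= M by move=> k; apply: yM.
have VE : forall k, V k = \sum_(j < k) z j by move=> k; rewrite /V /z stp2.
have V0 : forall k, 0 <=: V k by move=> k; rewrite VE; apply: lsum.
have CV0 : forall k, 0 <=: Ck k *: V k by move=> k; apply: lscale0; rewrite ?ltW.
have hz : forall k, d < g (z k) /\ g (mt (z k) (Ck k *: V k)) < d / 4.
  move=> k; rewrite /z stp1 /pick; case: (svalP (pk (Ck k *: V k))) => h1 h2.
  by split => //; apply: h2.
have zVk : forall j k, (j < k)%N -> z j <=: V k.
  by move=> j k jk; rewrite VE; apply: sum_ge_term.
pose u k := w k *: z k.
have u0 : forall k, 0 <=: u k by move=> k; apply: lscale0; rewrite ?ltW.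
have cu : cvgn (series u).
  apply: normed_cvg.
  apply: (@series_le_cvg _ _ (geometric M r)).
  - by move=> n /=.
  - by move=> n; rewrite /geometric /= mulr_ge0 // exprn_ge0 // ltW.
  - move=> n; rewrite /u /geometric /= normrZ gtr0_norm // mulrC.
    by rewrite ler_wpM2r // ltW.
  - by apply: is_cvg_geometric_series; rewrite gtr0_norm.
pose xs := limn (series u).
have xs_ge : forall k, u k <=: xs.
  move=> k; apply: lsub0'; apply: (@cone_closed_ev (fun N => series u N - u k) _ k.+1).
    by apply: cvgB => //; exact: cvg_cst.
  move=> N kN; apply: lsub0; rewrite /series /= big_mkord.
  exact: sum_ge_term.
have xs0 : 0 <=: xs.
  apply: (@cone_closed_ev (series u) _ 0%N) => // N _.
  by rewrite /series /= big_mkord; apply: lsum.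
have wxs0 : forall k, 0 <=: w k *: xs by move=> k; apply: lscale0; rewrite ?ltW.
pose e k := pos (z k - Ck k *: V k - w k *: xs).
have e0 : forall k, 0 <=: e k by move=> k; apply: pos_ge0.
have ez : forall k, e k <=: z k.
  move=> k; rewrite -(pos_id (z0 k)); apply: pos_mono.
  rewrite -addrA -opprD -{2}[z k]addr0; apply: laddl.
  by rewrite -oppr0; apply: lopp; apply: ladd0.
have edis : forall j k, (j < k)%N -> mt (e j) (e k) = 0.
  move=> j k jk.
  pose al := (w j * w k)^-1.
  have al0 : 0 < al by rewrite /al invr_gt0 mulr_gt0.
  have hp : e j <=: pos (z j - (w j * w k) *: z k).
    apply: pos_mono; rewrite -addrA -opprD; apply: laddl; apply: lopp.
    rewrite -[X in X <=: _]add0r; apply: ladd; first exact: CV0.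
    by rewrite -scalerA; apply: lscale; rewrite ?ltW //; apply: xs_ge.
  have hq : e k <=: pos (z k - Ck k *: z j).
    apply: pos_mono; rewrite -addrA -opprD; apply: laddl; apply: lopp.
    rewrite -[X in X <=: _]addr0; apply: ladd; last exact: wxs0.
    by apply: lscale; rewrite ?ltW //; apply: zVk.
  have hc : al *: (z j - (w j * w k) *: z k) + (z k - Ck k *: z j) <=: 0.
    rewrite scalerBr scalerA mulVf ?gt_eqF ?mulr_gt0 // scale1r addrA subrK.
    rewrite -scalerBl.
    have cal : al <= Ck k.
      rewrite /al /Ck expr2 lef_pV2 ?posrE ?mulr_gt0 //.
      by rewrite ler_pM2r // wdec // ltnW.
    have : 0 <=: (Ck k - al) *: z j by apply: lscale0; rewrite ?subr_ge0.
    by move/lopp; rewrite oppr0 -scaleNr opprB.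
  apply: lanti; last exact: m_ge0.
  rewrite -(disj_crit al0 hc); exact: mmono.
have glow : forall k, g (z k) - g (mt (z k) (Ck k *: V k)) - w k * g xs <= g (e k).
  move=> k; set v := Ck k *: V k.
  rewrite -(fZ hg.1) -!(fB hg.1); apply: (pd_mono hg).
  have -> : z k - mt (z k) v = pos (z k - v).
    by apply/eqP; rewrite subr_eq addrC decomp.
  rewrite /e /pos -[X in _ <=: X]/(bjoin L _ 0) -/v.
  rewrite -[X in X - _]/(bjoin L (z k - v) 0) -jD add0r.
  apply: jmono; first exact: lrefl.
  by rewrite -oppr0; apply: lopp.
pose phs k := phi L g (e k).
have phs_pd : forall k, posdual L (phs k) by move=> k; exact: (phi_pd hg Cg0 hCg (e0 k)).
have phs_sum : forall n a, 0 <=: a -> \sum_(k < n) phs k a <= g a.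
  by move=> n a ha; exact: (phi_sum hg n e0 edis ha).
have hM1 : 0 < M + 1 by lra.
have eps0 : 0 < d / (4 * (M + 1)) by rewrite divr_gt0 // mulr_gt0.
have [i0 Hi0] := tail_small Cg0 hCg phs_pd phs_sum doc eps0.
have gxs : geometric `|g xs| r @ \oo --> 0 by apply: cvg_geometric; rewrite gtr0_norm.
have d4 : 0 < d / 4 by rewrite divr_gt0.
move/cvgr_dist_le: gxs => /(_ _ d4) [K _ HK].
pose k := maxn i0 K.
have hk1 : w k * g xs <= d / 4.
  have := HK k (leq_maxr _ _); rewrite /geometric /= sub0r normrN.
  move=> h; apply: le_trans _ h.
  rewrite ger0_norm; last by rewrite mulr_ge0 // exprn_ge0 // ltW.
  rewrite mulrC /w; apply: ler_wpM2r; [by rewrite exprn_ge0 // ltW | exact: ler_norm].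
have [hk2 hk3] := hz k.
have hk4 := glow k.
have hk5 : phs k (e k) <= ft L phs k (e k).
  rewrite (ftE phs_pd phs_sum k (e0 k)).
  have := Ps_le phs_sum k.+1 (e0 k).
  by rewrite /Ps big_ord_recr /=; lra.
have hk6 : g (e k) <= phs k (e k) by exact: (phi_self hg (e0 k)).
have hk7 : ft L phs k (e k) <= (M + 1) * (d / (4 * (M + 1))).
  have hn : `|(M + 1)^-1 *: e k| <= 1.
    rewrite normrZ gtr0_norm ?invr_gt0 // ler_pdivrMl // mulr1.
    have := norm_le (e0 k) (ez k); have := zM k; lra.
  have := Hi0 k (leq_maxl _ _) _ hn.
  rewrite (fZ (ft_dual Cg0 hCg phs_pd phs_sum k)) normrM gtr0_norm ?invr_gt0 //.
  rewrite ler_pdivrMl // => h; apply: le_trans (ler_norm _) h.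
have : (M + 1) * (d / (4 * (M + 1))) = d / 4 by field; rewrite gt_eqF.
lra.
Qed.
End Main.

Theorem proposition2p1 (R : realType) (E : completeNormedModType R)
  (L : banach_lattice E) (X : completeNormedModType R) (T : E -> X) :
  dual_order_continuous L ->
  is_operator T ->
  dunford_pettis T ->
  uaw_dunford_pettis L T.
Proof.
move=> doc _ dp x [M xM] hu; apply: dp => f hf.
have [Cf [Cf0 hCf]] := dual_bound hf.
pose y n := babs L (x n).
have y0 : forall n, ble L 0 (y n) by move=> n; apply: ab_ge0.
have yM : forall n, `|y n| <= M by move=> n; rewrite /y norm_ab.
have hp := gp_pd L hf Cf0 hCf.
have hm := gm_pd L hf Cf0 hCf.
have cp := main_pos doc hp y0 yM (fun u hu0 => hu u hu0 _ hp.1).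
have cm := main_pos doc hm y0 yM (fun u hu0 => hu u hu0 _ hm.1).
have fE : forall a, ble L 0 a -> f a = gp L f a - gm L f a.
  by move=> a ha; rewrite (gpE hf Cf0 hCf ha) (gmE hf Cf0 hCf ha); lra.
have bnd : forall n, `|f (x n)| <= gp L f (y n) + gm L f (y n).
  move=> n; rewrite /y ab_posneg -{1}(posBneg L (x n)).
  rewrite (fB hf) (fD hp.1) (fD hm.1) (fE _ (pos_ge0 L (x n))) (fE _ (neg_ge0 L (x n))).
  have := hp.2 _ (pos_ge0 L (x n)); have := hp.2 _ (neg_ge0 L (x n)).
  have := hm.2 _ (pos_ge0 L (x n)); have := hm.2 _ (neg_ge0 L (x n)).
  rewrite /= => h1 h2 h3 h4; rewrite ler_norml; lra.
have cs : (fun n => gp L f (y n) + gm L f (y n)) @ \oo --> 0.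
  by rewrite -[0]addr0; apply: cvgD.
apply/cvgrPdist_le => e e0.
move/cvgrPdist_le: cs => /(_ e e0); apply: filterS => n.
rewrite !sub0r !normrN; apply: le_trans.
by apply: le_trans (bnd n) (ler_norm _).
Qed.
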